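(* There is an absolute constant $C>0$ such that the following holds. Let $A$ be a real $n\times n$ matrix, let $0<q\le n$, and let $Q$ be a random subset of $\{1,\dots,n\}$ in which each element is included independently with probability $q/n$. Then $$\mathbb E\,\|A|_{Q\times Q}\|_C\ \le\ C\Bigl(\Bigl(\frac qn\Bigr)^2\|A-D(A)\|_C+\frac qn\,\|D(A)\|_C+\Bigl(\frac qn\Bigr)^{3/2}\bigl(\|A\|_{\rm Col}+\|A^T\|_{\rm Col}\bigr)\Bigr).$$
   Context: The cut norm of a matrix $B=(B_{ij})$ is $\|B\|_C=\max_{I,J}\bigl|\sum_{i\in I,j\in J}B_{ij}\bigr|$, the maximum over all subsets $I$ of row indices and $J$ of column indices. $A|_{Q\times Q}=(A_{ij})_{i,j\in Q}$ is the principal submatrix on $Q$ (its cut norm is $0$ if $Q=\emptyset$). $D(A)$ is the diagonal part of $A$ (the matrix with the same diagonal as $A$ and zeros off the diagonal). $\|A\|_{\rm Col}$ is the sum of the Euclidean lengths of the columns of $A$. *)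

(* Defs.v *)
From HB Require Import structures.
From mathcomp Require Import all_boot all_order all_algebra.
From mathcomp Require Import Rstruct.
Set Implicit Arguments. Unset Strict Implicit. Unset Printing Implicit Defensive.
Import Order.TTheory GRing.Theory Num.Theory.
Local Open Scope ring_scope.

Definition RR := Rdefinitions.R.

Definition cutnorm (n : nat) (B : 'M[RR]_n) : RR :=
  \big[Num.max/0]_(I : {set 'I_n}) \big[Num.max/0]_(J : {set 'I_n})
     `| \sum_(i in I) \sum_(j in J) B i j |.

Definition cutnorm_sub (n : nat) (Q : {set 'I_n}) (B : 'M[RR]_n) : RR :=
  \big[Num.max/0]_(I : {set 'I_n} | I \subset Q)
    \big[Num.max/0]_(J : {set 'I_n} | J \subset Q)
     `| \sum_(i in I) \sum_(j in J) B i j |.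

Definition diagpart (n : nat) (A : 'M[RR]_n) : 'M[RR]_n :=
  \matrix_(i, j) (if i == j then A i j else 0).

Definition colnorm (n : nat) (A : 'M[RR]_n) : RR :=
  \sum_(j < n) Num.sqrt (\sum_(i < n) A i j ^+ 2).

(* Probability of the outcome Q when each element of {1..n} is included
   independently with probability p. *)
Definition binom_prob (n : nat) (p : RR) (Q : {set 'I_n}) : RR :=
  p ^+ #|Q| * (1 - p) ^+ (n - #|Q|)%N.

Definition expect_subset (n : nat) (p : RR) (f : {set 'I_n} -> RR) : RR :=
  \sum_(Q : {set 'I_n}) binom_prob p Q * f Q.

(* Main.v *)
Set Warnings "-all".
Require Import Defs.
From HB Require Import structures.
From mathcomp Require Import all_boot all_order all_algebra.
From mathcomp Require Import Rstruct.
From mathcomp Require Import ring lra.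
Import Order.TTheory GRing.Theory Num.Theory.
Set Implicit Arguments. Unset Strict Implicit. Unset Printing Implicit Defensive.
Local Open Scope ring_scope.

Definition Xb (n : nat) (k : 'I_n) (Q : {set 'I_n}) : RR := (k \in Q)%:R.

Lemma E_ext n p (f g : {set 'I_n} -> RR) :
  (forall Q, f Q = g Q) -> expect_subset p f = expect_subset p g.
Proof. by move=> H; apply: eq_bigr => Q _; rewrite H. Qed.

Lemma ED n p (f g : {set 'I_n} -> RR) :
  expect_subset p (fun Q => f Q + g Q) = expect_subset p f + expect_subset p g.
Proof. by rewrite /expect_subset -big_split; apply: eq_bigr => Q _; rewrite mulrDr. Qed.

Lemma EZ n p c (f : {set 'I_n} -> RR) :
  expect_subset p (fun Q => c * f Q) = c * expect_subset p f.
Proof. by rewrite /expect_subset mulr_sumr; apply: eq_bigr => Q _; rewrite mulrCA. Qed.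

Lemma EN n p (f : {set 'I_n} -> RR) :
  expect_subset p (fun Q => - f Q) = - expect_subset p f.
Proof. by rewrite /expect_subset -sumrN; apply: eq_bigr => Q _; rewrite mulrN. Qed.

Lemma EB n p (f g : {set 'I_n} -> RR) :
  expect_subset p (fun Q => f Q - g Q) = expect_subset p f - expect_subset p g.
Proof. by rewrite ED EN. Qed.

Lemma Esum n p (I : finType) (P : pred I) (F : I -> {set 'I_n} -> RR) :
  expect_subset p (fun Q => \sum_(i | P i) F i Q) = \sum_(i | P i) expect_subset p (F i).
Proof.
rewrite /expect_subset exchange_big /=; apply: eq_bigr => i _.
by rewrite mulr_sumr.
Qed.

Lemma w_ge0 n p (Q : {set 'I_n}) : 0 <= p <= 1 -> 0 <= binom_prob p Q.
Proof.
case/andP=> p0 p1; rewrite /binom_prob mulr_ge0 // exprn_ge0 //.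
by rewrite subr_ge0.
Qed.

Lemma E_le n p (f g : {set 'I_n} -> RR) : 0 <= p <= 1 ->
  (forall Q, f Q <= g Q) -> expect_subset p f <= expect_subset p g.
Proof.
move=> hp H; rewrite /expect_subset; apply: ler_sum => Q _.
by apply: ler_wpM2l; [exact: w_ge0|exact: H].
Qed.

Lemma E_ge0 n p (f : {set 'I_n} -> RR) : 0 <= p <= 1 ->
  (forall Q, 0 <= f Q) -> 0 <= expect_subset p f.
Proof.
move=> hp H; rewrite /expect_subset; apply: sumr_ge0 => Q _.
by apply: mulr_ge0; [exact: w_ge0|exact: H].
Qed.

Lemma E1 n p : expect_subset p (fun _ : {set 'I_n} => 1) = 1.
Proof.
rewrite /expect_subset /binom_prob.
rewrite (partition_big (fun Q : {set 'I_n} => (inord #|Q| : 'I_n.+1)) xpredT) //=.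
transitivity (((1 - p) + p) ^+ n); last by rewrite subrK expr1n.
rewrite exprDn; apply: eq_bigr => j _.
have E : forall Q : {set 'I_n}, ((inord #|Q| : 'I_n.+1) == j) = (#|Q| == j).
  move=> Q; apply/eqP/eqP => [<-|->]; last by apply: val_inj; rewrite /= inordK.
  by rewrite inordK // ltnS; apply: leq_trans (max_card _) _; rewrite card_ord.
rewrite (eq_bigl (fun Q : {set 'I_n} => #|Q| == j)); last by move=> Q; rewrite E.
rewrite (eq_bigr (fun _ => p ^+ j * (1 - p) ^+ (n - j))); last first.
  by move=> Q /eqP HQ; rewrite HQ mulr1.
rewrite sumr_const.
have Hc : #|[pred Q : {set 'I_n} | #|Q| == j]| = 'C(#|'I_n|, j).
  by rewrite -(card_draws 'I_n j); apply: eq_card => Q; rewrite !inE.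
by rewrite Hc card_ord mulrC.
Qed.

Lemma setU1_mem (T : finType) (k : T) (Q : {set T}) : k \in Q -> k |: Q = Q.
Proof. by move=> h; apply/setP=> x; rewrite !inE; case: eqP => // ->. Qed.

Lemma setD1_nmem (T : finType) (k : T) (Q : {set T}) : k \notin Q -> Q :\ k = Q.
Proof.
move=> h; apply/setP=> x; rewrite !inE; case: eqP => // ->.
by rewrite (negbTE h).
Qed.

Lemma setU1U1 (T : finType) (k : T) (Q : {set T}) : k |: (k |: Q) = k |: Q.
Proof. by rewrite setU1_mem // setU11. Qed.

Lemma setD1U1 (T : finType) (k : T) (Q : {set T}) : (k |: Q) :\ k = Q :\ k.
Proof. by apply/setP=> x; rewrite !inE; case: eqP. Qed.

Lemma setU1D1 (T : finType) (k : T) (Q : {set T}) : k |: (Q :\ k) = k |: Q.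
Proof. by apply/setP=> x; rewrite !inE; case: eqP. Qed.

Lemma setD1D1 (T : finType) (k : T) (Q : {set T}) : (Q :\ k) :\ k = Q :\ k.
Proof. by apply/setP=> x; rewrite !inE; case: eqP. Qed.

Lemma split_sets n (k : 'I_n) (G : {set 'I_n} -> RR) :
  \sum_(Q : {set 'I_n}) G Q = \sum_(Q : {set 'I_n} | k \notin Q) (G Q + G (k |: Q)).
Proof.
rewrite (bigID (fun Q : {set 'I_n} => k \in Q)) /= addrC big_split /=; congr (_ + _).
rewrite (reindex_onto (fun R : {set 'I_n} => k |: R) (fun Q : {set 'I_n} => Q :\ k)) /=; last first.
  by move=> Q hQ; rewrite setD1K.
apply: eq_bigl => R; rewrite setU11 /=.
apply/idP/idP => [/eqP <-|h]; first by rewrite setD11.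
by rewrite setU1K.
Qed.

Lemma resample n p (k : 'I_n) (F : {set 'I_n} -> RR) :
  expect_subset p F =
  expect_subset p (fun Q => p * F (k |: Q) + (1 - p) * F (Q :\ k)).
Proof.
rewrite /expect_subset (split_sets k (fun Q => binom_prob p Q * F Q)).
rewrite (split_sets k (fun Q => binom_prob p Q * (p * F (k |: Q) + (1 - p) * F (Q :\ k)))).
apply: eq_bigr => R hR.
rewrite setU1U1 setD1U1 setD1_nmem //.
set W := p ^+ #|R| * (1 - p) ^+ (n - #|R|.+1).
have hc : #|k |: R| = #|R|.+1 by rewrite cardsU1 hR.
have hle : (#|R|.+1 <= n)%N.
  by rewrite -hc; apply: leq_trans (max_card _) _; rewrite card_ord.
have w1 : binom_prob p (k |: R) = p * W.
  by rewrite /binom_prob hc exprS /W mulrA.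
have w0 : binom_prob p R = (1 - p) * W.
  rewrite /binom_prob /W subnS.
  have -> : (n - #|R|)%N = (n - #|R|).-1.+1 by rewrite prednK // subn_gt0.
  by rewrite exprS /=; ring.
rewrite w1 w0; ring.
Qed.

Lemma inv_mem n (k : 'I_n) (G : {set 'I_n} -> RR) :
  (forall Q, G (k |: Q) = G (Q :\ k)) -> forall Q, G (k |: Q) = G Q.
Proof.
move=> H Q; case: (boolP (k \in Q)) => h; first by rewrite setU1_mem.
by rewrite H setD1_nmem.
Qed.

Lemma E_ind n p (k : 'I_n) (G : {set 'I_n} -> RR) :
  (forall Q, G (k |: Q) = G (Q :\ k)) ->
  expect_subset p (fun Q => Xb k Q * G Q) = p * expect_subset p G.
Proof.
move=> H; rewrite (resample p k) -EZ; apply: E_ext => Q; by rewrite /Xb setU11 setD11 (inv_mem H) /= mul1r mul0r mulr0 addr0.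

Qed.

Lemma E_X n p (k : 'I_n) : expect_subset p (Xb k) = p.
Proof.
have := @E_ind n p k (fun _ => 1) (fun _ => erefl).
rewrite E1 mulr1 => H; rewrite -[RHS]H.
by rewrite /expect_subset; apply: eq_bigr => Q _; rewrite mulr1.
Qed.

Definition EE n p (F : {set 'I_n} -> {set 'I_n} -> RR) : RR :=
  expect_subset p (fun Q => expect_subset p (fun Q' => F Q Q')).

Definition Z n (k : 'I_n) (Q Q' : {set 'I_n}) : RR := Xb k Q - Xb k Q'.

Lemma EE_le n p (F G : {set 'I_n} -> {set 'I_n} -> RR) : 0 <= p <= 1 ->
  (forall Q Q', F Q Q' <= G Q Q') -> EE p F <= EE p G.
Proof. by move=> hp H; apply: E_le => // Q; apply: E_le. Qed.

Lemma EE_ge0 n p (F : {set 'I_n} -> {set 'I_n} -> RR) : 0 <= p <= 1 ->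
  (forall Q Q', 0 <= F Q Q') -> 0 <= EE p F.
Proof. by move=> hp H; apply: E_ge0 => // Q; apply: E_ge0. Qed.

Lemma EEsum n p (I : finType) (P : pred I) (F : I -> {set 'I_n} -> {set 'I_n} -> RR) :
  EE p (fun Q Q' => \sum_(i | P i) F i Q Q') = \sum_(i | P i) EE p (F i).
Proof.
rewrite /EE -Esum; apply: E_ext => Q; by rewrite Esum.
Qed.

Lemma EEZ n p c (F : {set 'I_n} -> {set 'I_n} -> RR) :
  EE p (fun Q Q' => c * F Q Q') = c * EE p F.
Proof. rewrite /EE -EZ; apply: E_ext => Q; by rewrite EZ. Qed.

Lemma EED n p (F G : {set 'I_n} -> {set 'I_n} -> RR) :
  EE p (fun Q Q' => F Q Q' + G Q Q') = EE p F + EE p G.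
Proof. rewrite /EE -ED; apply: E_ext => Q; by rewrite ED. Qed.

Lemma EEN n p (F : {set 'I_n} -> {set 'I_n} -> RR) :
  EE p (fun Q Q' => - F Q Q') = - EE p F.
Proof. rewrite /EE -EN; apply: E_ext => Q; by rewrite EN. Qed.

Lemma E_const n p c : expect_subset p (fun _ : {set 'I_n} => c) = c.
Proof.
by have := EZ p c (fun _ : {set 'I_n} => 1); rewrite E1 mulr1.
Qed.

Lemma EE_l n p (f : {set 'I_n} -> RR) : EE p (fun Q Q' => f Q) = expect_subset p f.
Proof. by rewrite /EE; apply: E_ext => Q; rewrite E_const. Qed.

Lemma EE_r n p (f : {set 'I_n} -> RR) : EE p (fun Q Q' => f Q') = expect_subset p f.
Proof. by rewrite /EE E_const. Qed.

Lemma Xb2 n (k : 'I_n) Q : Xb k Q * Xb k Q = Xb k Q.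
Proof. by rewrite /Xb; case: (k \in Q); rewrite ?mulr1 ?mulr0. Qed.

Lemma E_XX n p (k l : 'I_n) :
  expect_subset p (fun Q => Xb k Q * Xb l Q) = if k == l then p else p * p.
Proof.
case: eqP => [<-|/eqP hkl].
  rewrite -[RHS](E_X p k); apply: E_ext => Q; exact: Xb2.
rewrite E_ind ?E_X // => Q; rewrite /Xb !inE.
by rewrite eq_sym (negbTE hkl).
Qed.

Lemma EE_ZZ n p (k l : 'I_n) :
  EE p (fun Q Q' => Z k Q Q' * Z l Q Q') = if k == l then 2 * (p - p * p) else 0.
Proof.
have e : forall Q Q', Z k Q Q' * Z l Q Q' =
   Xb k Q * Xb l Q + Xb k Q' * Xb l Q' + (- (Xb k Q * Xb l Q') + - (Xb l Q * Xb k Q')).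
  by move=> Q Q'; rewrite /Z; ring.
rewrite (_ : EE p _ = EE p (fun Q Q' => Xb k Q * Xb l Q + Xb k Q' * Xb l Q' +
   (- (Xb k Q * Xb l Q') + - (Xb l Q * Xb k Q')))); last first.
  by rewrite /EE; apply: E_ext => Q; apply: E_ext => Q'; rewrite e.
rewrite !EED !EEN EE_l EE_r E_XX.
have m : forall a b : 'I_n, EE p (fun Q Q' => Xb a Q * Xb b Q') = p * p.
  move=> a b; rewrite /EE.
  transitivity (expect_subset p (fun Q => p * Xb a Q)); last by rewrite EZ E_X.
  by apply: E_ext => Q; rewrite EZ E_X mulrC.
rewrite !m; case: eqP => _; ring.
Qed.

Lemma EE_sq n p (K : {set 'I_n}) (m : 'I_n -> RR) :
  EE p (fun Q Q' => (\sum_(k in K) Z k Q Q' * m k) ^+ 2) =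
  2 * (p - p * p) * \sum_(k in K) m k ^+ 2.
Proof.
rewrite (_ : EE p _ = EE p (fun Q Q' => \sum_(k in K) \sum_(l in K)
     (m k * m l) * (Z k Q Q' * Z l Q Q'))); last first.
  rewrite /EE; apply: E_ext => Q; apply: E_ext => Q'.
  rewrite expr2 mulr_suml; apply: eq_bigr => k _; rewrite mulr_sumr.
  by apply: eq_bigr => l _; ring.
rewrite EEsum mulr_sumr; apply: eq_bigr => k hk.
rewrite EEsum (bigD1 k) //= big1 ?addr0.
  by rewrite EEZ EE_ZZ eqxx; ring.
move=> l /andP [_ hl]; rewrite EEZ EE_ZZ eq_sym (negbTE hl); ring.
Qed.

Lemma E_CS2 n p (f : {set 'I_n} -> RR) : 0 <= p <= 1 ->
  expect_subset p f ^+ 2 <= expect_subset p (fun Q => f Q ^+ 2).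
Proof.
move=> hp; set m := expect_subset p f.
have h : 0 <= expect_subset p (fun Q => (f Q - m) ^+ 2).
  by apply: E_ge0 => // Q; apply: sqr_ge0.
have e : expect_subset p (fun Q => (f Q - m) ^+ 2) =
   expect_subset p (fun Q => f Q ^+ 2) + (-2 * m) * m + m ^+ 2.
  transitivity (expect_subset p (fun Q => (f Q ^+ 2 + (-2 * m) * f Q) + m ^+ 2)).
    by apply: E_ext => Q; ring.
  by rewrite ED ED EZ E_const.
rewrite e -/m in h; lra.
Qed.

Lemma E_CS n p (f : {set 'I_n} -> RR) : 0 <= p <= 1 ->
  expect_subset p f <= Num.sqrt (expect_subset p (fun Q => f Q ^+ 2)).
Proof.
move=> hp; apply: le_trans (ler_norm _) _.
by rewrite -sqrtr_sqr ler_wsqrtr // E_CS2.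
Qed.

Lemma EE_CS n p (F : {set 'I_n} -> {set 'I_n} -> RR) : 0 <= p <= 1 ->
  EE p (fun Q Q' => `|F Q Q'|) <= Num.sqrt (EE p (fun Q Q' => F Q Q' ^+ 2)).
Proof.
move=> hp; apply: le_trans (E_CS _ hp) _.
rewrite /EE ler_wsqrtr //; apply: E_le => // Q.
apply: le_trans (E_CS2 _ hp) _.
apply: E_le => // Q'; by rewrite real_normK // num_real.
Qed.

Definition phi (x : RR) : RR := Num.max x 0.

Lemma phi_ge0 x : 0 <= phi x.
Proof. by rewrite /phi le_max lexx orbT. Qed.

Lemma phi_ge x : x <= phi x.
Proof. by rewrite /phi le_max lexx. Qed.

Lemma phi0 : phi 0 = 0.
Proof. by rewrite /phi maxxx. Qed.

Lemma phi_lip x y : y <= x -> phi x - phi y <= x - y.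
Proof.
rewrite /phi !maxEle => h.
case: ifP => hx; case: ifP => hy; lra.
Qed.

Lemma phi_mono x y : x <= y -> phi x <= phi y.
Proof. rewrite /phi !maxEle => h; case: ifP => hx; case: ifP => hy; lra. Qed.

Lemma phi_le_abs x : phi x <= `|x|.
Proof. rewrite /phi maxEle; case: ifP => h; first exact: normr_ge0. exact: ler_norm. Qed.

Lemma bigmax_ge0 (T : finType) (P : pred T) (f : T -> RR) :
  0 <= \big[Num.max/0]_(t | P t) f t.
Proof. exact: bigmax_ge_id. Qed.

Lemma max_step (T : finType) (P : pred T) (t0 : T) (u A : T -> RR) :
  P t0 -> u t0 = 0 -> A t0 = 0 ->
  \big[Num.max/0]_(t | P t) (phi (u t) + A t) +
  \big[Num.max/0]_(t | P t) (- phi (u t) + A t) <=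
  \big[Num.max/0]_(t | P t) (u t + A t) +
  \big[Num.max/0]_(t | P t) (- u t + A t).
Proof.
move=> P0 u0 A0.
set R := (X in _ <= X).
have R0 : 0 <= R by rewrite addr_ge0 // bigmax_ge0.
have pair : forall t s, P t -> P s -> (phi (u t) + A t) + (- phi (u s) + A s) <= R.
  move=> t s Pt Ps; case: (lerP (u s) (u t)) => h.
    have := phi_lip h.
    have := le_bigmax_cond 0 (fun t => u t + A t) Pt.
    have := le_bigmax_cond 0 (fun t => - u t + A t) Ps.
    rewrite /R; lra.
  have := phi_mono (ltW h).
  have := le_bigmax_cond 0 (fun t => u t + A t) Ps.
  have := le_bigmax_cond 0 (fun t => - u t + A t) Pt.
  rewrite /R; lra.
have f0 : phi (u t0) + A t0 = 0 by rewrite u0 A0 phi0 addr0.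
have g0 : - phi (u t0) + A t0 = 0 by rewrite u0 A0 phi0 oppr0 addr0.
set L2 := \big[Num.max/0]_(t | P t) (- phi (u t) + A t).
have L2R : L2 <= R.
  apply: bigmax_le => // s Ps; have := pair t0 s P0 Ps; lra.
rewrite -lerBrDr; apply: bigmax_le => [|t Pt]; first by lra.
rewrite lerBrDr addrC -lerBrDr; apply: bigmax_le => [|s Ps].
  have := pair t t0 Pt P0; lra.
have := pair t s Pt Ps; lra.
Qed.

Lemma Xb_offU n (j k : 'I_n) Q : j != k -> Xb j (k |: Q) = Xb j Q.
Proof. by move=> h; rewrite /Xb !inE (negbTE h). Qed.
Lemma Xb_offD n (j k : 'I_n) Q : j != k -> Xb j (Q :\ k) = Xb j Q.
Proof. by move=> h; rewrite /Xb !inE h. Qed.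

Lemma resample2 n p (k : 'I_n) (F : {set 'I_n} -> {set 'I_n} -> RR) :
  EE p F = EE p (fun Q Q' =>
    p * (p * F (k |: Q) (k |: Q') + (1 - p) * F (k |: Q) (Q' :\ k)) +
    (1 - p) * (p * F (Q :\ k) (k |: Q') + (1 - p) * F (Q :\ k) (Q' :\ k))).
Proof.
rewrite /EE (resample p k); apply: E_ext => Q.
rewrite (resample p k (F (k |: Q))) (resample p k (F (Q :\ k))).
by rewrite -!EZ -ED.
Qed.

Definition gh n (T : finType) (a : T -> 'I_n -> RR) (m : nat) (t : T) (j : 'I_n) : RR :=
  if (j < m)%N then a t j else phi (a t j).

Definition Hyb n (T : finType) (K : {set 'I_n}) (P : {set 'I_n} -> T -> bool)
  (a : T -> 'I_n -> RR) (m : nat) (Q Q' : {set 'I_n}) : RR :=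
  \big[Num.max/0]_(t | P Q t) \sum_(j in K) Z j Q Q' * gh a m t j.

Lemma Hyb_decomp n (T : finType) (K : {set 'I_n}) (P : {set 'I_n} -> T -> bool)
  (a : T -> 'I_n -> RR) (m : nat) (k : 'I_n) (Q Q' X Y : {set 'I_n}) m' :
  k \in K -> (forall j : 'I_n, j != k -> gh a m' ^~ j =1 gh a m ^~ j) ->
  (forall t, P X t = P Q t) -> (forall j, j != k -> Z j X Y = Z j Q Q') ->
  Hyb K P a m' X Y = \big[Num.max/0]_(t | P Q t)
     (Z k X Y * gh a m' t k + \sum_(j in K | j != k) Z j Q Q' * gh a m t j).
Proof.
move=> kK hg hP hZ; rewrite /Hyb; apply: eq_big => [t|t _]; first exact: hP.
rewrite (bigD1 k) //=; congr (_ + _); apply: eq_bigr => j /andP [_ hj].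
by rewrite hZ // hg.
Qed.

Lemma hyb_step n p (T : finType) (K : {set 'I_n}) (P : {set 'I_n} -> T -> bool)
  (a : T -> 'I_n -> RR) (t0 : T) m :
  0 <= p <= 1 -> (forall Q, P Q t0) -> (forall k, a t0 k = 0) ->
  (forall Q t k, k \in K -> P (k |: Q) t = P (Q :\ k) t) ->
  EE p (Hyb K P a m) <= EE p (Hyb K P a m.+1).
Proof.
move=> hp hP0 ha0 hinv.
case: (ltnP m n) => hm; last first.
  apply: EE_le => // Q Q'; rewrite /Hyb le_eqVlt; apply/orP; left; apply/eqP.
  apply: eq_bigr => t _; apply: eq_bigr => j _; rewrite /gh.
  have h1 : (j < m)%N by apply: leq_trans (ltn_ord j) hm.
  by rewrite h1 ltnS ltnW.
set k := Ordinal hm.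
have gk : forall t, gh a m t k = phi (a t k) by move=> t; rewrite /gh ltnn.
have gk1 : forall t, gh a m.+1 t k = a t k by move=> t; rewrite /gh ltnSn.
have goff : forall j : 'I_n, j != k -> gh a m.+1 ^~ j =1 gh a m ^~ j.
  move=> j hj t; rewrite /gh ltnS leq_eqVlt.
  have -> : (nat_of_ord j == m) = false.
    by apply/negbTE; apply: contra hj => /eqP h; apply/eqP; apply: val_inj.
  by [].
have grefl : forall j : 'I_n, j != k -> gh a m ^~ j =1 gh a m ^~ j by [].
case: (boolP (k \in K)) => kK; last first.
  apply: EE_le => // Q Q'; rewrite /Hyb le_eqVlt; apply/orP; left; apply/eqP.
  apply: eq_bigr => t _; apply: eq_bigr => j jK; rewrite goff //.
  by apply: contraNneq kK => <-.
rewrite [EE p (Hyb K P a m)](resample2 _ k) [EE p (Hyb K P a m.+1)](resample2 _ k).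
apply: EE_le => // Q Q'.
have PU : forall t, P (k |: Q) t = P Q t.
  by move=> t; case: (boolP (k \in Q)) => h; [rewrite setU1_mem|rewrite hinv // setD1_nmem].
have PD : forall t, P (Q :\ k) t = P Q t by move=> t; rewrite -hinv // PU.
set Rest := fun t => \sum_(j in K | j != k) Z j Q Q' * gh a m t j.
have ZUU : forall j, j != k -> Z j (k |: Q) (k |: Q') = Z j Q Q'.
  by move=> j hj; rewrite /Z !Xb_offU.
have ZUD : forall j, j != k -> Z j (k |: Q) (Q' :\ k) = Z j Q Q'.
  by move=> j hj; rewrite /Z Xb_offU // Xb_offD.
have ZDU : forall j, j != k -> Z j (Q :\ k) (k |: Q') = Z j Q Q'.
  by move=> j hj; rewrite /Z Xb_offU // Xb_offD.
have ZDD : forall j, j != k -> Z j (Q :\ k) (Q' :\ k) = Z j Q Q'.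
  by move=> j hj; rewrite /Z !Xb_offD.
rewrite (Hyb_decomp kK goff PU ZUU) (Hyb_decomp kK grefl PU ZUU).
rewrite (Hyb_decomp kK goff PU ZUD) (Hyb_decomp kK grefl PU ZUD).
rewrite (Hyb_decomp kK goff PD ZDU) (Hyb_decomp kK grefl PD ZDU).
rewrite (Hyb_decomp kK goff PD ZDD) (Hyb_decomp kK grefl PD ZDD).
rewrite -/Rest.
have zUU : Z k (k |: Q) (k |: Q') = 0 by rewrite /Z /Xb !setU11 subrr.
have zDD : Z k (Q :\ k) (Q' :\ k) = 0 by rewrite /Z /Xb !setD11 subrr.
have zUD : Z k (k |: Q) (Q' :\ k) = 1 by rewrite /Z /Xb setU11 setD11 subr0.
have zDU : Z k (Q :\ k) (k |: Q') = -1 by rewrite /Z /Xb setU11 setD11 sub0r.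
rewrite zUU zDD zUD zDU.
have e1 : forall m', \big[Num.max/0]_(t | P Q t) (0 * gh a m' t k + Rest t) =
   \big[Num.max/0]_(t | P Q t) Rest t.
  by move=> m'; apply: eq_bigr => t _; rewrite mul0r add0r.
have e2 : \big[Num.max/0]_(t | P Q t) (1 * gh a m t k + Rest t) =
   \big[Num.max/0]_(t | P Q t) (phi (a t k) + Rest t).
  by apply: eq_bigr => t _; rewrite mul1r gk.
have e3 : \big[Num.max/0]_(t | P Q t) (-1 * gh a m t k + Rest t) =
   \big[Num.max/0]_(t | P Q t) (- phi (a t k) + Rest t).
  by apply: eq_bigr => t _; rewrite mulN1r gk.
have e4 : \big[Num.max/0]_(t | P Q t) (1 * gh a m.+1 t k + Rest t) =
   \big[Num.max/0]_(t | P Q t) (a t k + Rest t).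
  by apply: eq_bigr => t _; rewrite mul1r gk1.
have e5 : \big[Num.max/0]_(t | P Q t) (-1 * gh a m.+1 t k + Rest t) =
   \big[Num.max/0]_(t | P Q t) (- a t k + Rest t).
  by apply: eq_bigr => t _; rewrite mulN1r gk1.
rewrite !e1 e2 e3 e4 e5.
have R0 : Rest t0 = 0.
  rewrite /Rest big1 // => j _; rewrite /gh ha0 phi0; case: ifP => _; exact: mulr0.
have key := @max_step T (P Q) t0 (fun t => a t k) Rest (hP0 Q) (ha0 k) R0.
have hpp : 0 <= p * (1 - p) by case/andP: hp => h0 h1; apply: mulr_ge0; lra.
nra.
Qed.

Lemma EE_ext n p (F G : {set 'I_n} -> {set 'I_n} -> RR) :
  (forall Q Q', F Q Q' = G Q Q') -> EE p F = EE p G.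
Proof. by move=> H; apply: E_ext => Q; apply: E_ext => Q'; exact: H. Qed.

Lemma contraction n p (T : finType) (K : {set 'I_n}) (P : {set 'I_n} -> T -> bool)
  (a : T -> 'I_n -> RR) (t0 : T) :
  0 <= p <= 1 -> (forall Q, P Q t0) -> (forall k, a t0 k = 0) ->
  (forall Q t k, k \in K -> P (k |: Q) t = P (Q :\ k) t) ->
  EE p (fun Q Q' => \big[Num.max/0]_(t | P Q t) \sum_(k in K) Z k Q Q' * phi (a t k)) <=
  EE p (fun Q Q' => \big[Num.max/0]_(t | P Q t) \sum_(k in K) Z k Q Q' * a t k).
Proof.
move=> hp hP0 ha0 hinv.
have H : forall m, EE p (Hyb K P a 0) <= EE p (Hyb K P a m).
  elim=> [|m IH] //; apply: (le_trans IH); exact: hyb_step hp hP0 ha0 hinv.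
have e0 : EE p (fun Q Q' => \big[Num.max/0]_(t | P Q t) \sum_(k in K) Z k Q Q' * phi (a t k))
   = EE p (Hyb K P a 0).
  apply: EE_ext => Q Q'; apply: eq_bigr => t _; apply: eq_bigr => j _.
  by rewrite /gh ltn0.
have e1 : EE p (Hyb K P a n) =
   EE p (fun Q Q' => \big[Num.max/0]_(t | P Q t) \sum_(k in K) Z k Q Q' * a t k).
  apply: EE_ext => Q Q'; apply: eq_bigr => t _; apply: eq_bigr => j _.
  by rewrite /gh ltn_ord.
by rewrite e0 -e1.
Qed.

Lemma E_X' n p (k : 'I_n) : expect_subset p (fun Q => Xb k Q) = p.
Proof. exact: E_X. Qed.

Lemma EZc n p (k : 'I_n) Q c :
  expect_subset p (fun Q' => Z k Q Q' * c) = (Xb k Q - p) * c.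
Proof.
transitivity (expect_subset p (fun Q' => Xb k Q * c + - (c * Xb k Q'))).
  by apply: E_ext => Q'; rewrite /Z; ring.
rewrite ED EN E_const EZ E_X; ring.
Qed.

Lemma symmetrize n p (T : finType) (K : {set 'I_n}) (P : {set 'I_n} -> T -> bool)
  (b : T -> 'I_n -> RR) :
  0 <= p <= 1 ->
  expect_subset p (fun Q => \big[Num.max/0]_(t | P Q t) \sum_(k in K) (Xb k Q - p) * b t k) <=
  EE p (fun Q Q' => \big[Num.max/0]_(t | P Q t) \sum_(k in K) Z k Q Q' * b t k).
Proof.
move=> hp; rewrite /EE; apply: E_le => // Q.
apply: bigmax_le => [|t Pt].
  by apply: E_ge0 => // Q'; exact: bigmax_ge0.
have -> : \sum_(k in K) (Xb k Q - p) * b t k =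
   expect_subset p (fun Q' => \sum_(k in K) Z k Q Q' * b t k).
  by rewrite Esum; apply: eq_bigr => k _; rewrite EZc.
apply: E_le => // Q'.
exact: (le_bigmax_cond 0 (fun t => \sum_(k in K) Z k Q Q' * b t k) Pt).
Qed.

Lemma sum_sub_le n (J Y : {set 'I_n}) (g : 'I_n -> RR) :
  J \subset Y -> (forall j, 0 <= g j) -> \sum_(j in J) g j <= \sum_(j in Y) g j.
Proof.
move=> /subsetP hJ hg; rewrite [X in X <= _]big_mkcond [X in _ <= X]big_mkcond.
apply: ler_sum => j _; case: ifP => h; first by rewrite hJ.
by case: ifP.
Qed.

Lemma sum_sub_phi n (J Y : {set 'I_n}) (f : 'I_n -> RR) :
  J \subset Y -> \sum_(j in J) f j <= \sum_(j in Y) phi (f j).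
Proof.
move=> hJ; apply: le_trans (sum_sub_le hJ (fun j => phi_ge0 (f j))).
by apply: ler_sum => j _; exact: phi_ge.
Qed.

Lemma sum_phi_set n (Y : {set 'I_n}) (f : 'I_n -> RR) :
  exists J : {set 'I_n}, J \subset Y /\ \sum_(j in Y) phi (f j) = \sum_(j in J) f j.
Proof.
exists [set j in Y | 0 <= f j]; split.
  by apply/subsetP => j; rewrite inE => /andP [].
rewrite [LHS]big_mkcond [RHS]big_mkcond; apply: eq_bigr => j _.
rewrite inE; case: (j \in Y) => //=; rewrite /phi maxEle.
by case: ifP => h1; case: ifP => h2; lra.
Qed.

Lemma sum_setD n (Q S : {set 'I_n}) (g : 'I_n -> RR) :
  \sum_(j in Q :\: S) g j = \sum_(j in ~: S) Xb j Q * g j.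
Proof.
rewrite [LHS]big_mkcond [RHS]big_mkcond; apply: eq_bigr => j _.
rewrite /Xb !inE; case: (j \in S) => //=; case: (j \in Q) => /=.
  by rewrite mul1r. by rewrite mul0r.
Qed.

Lemma sum_setI n (Q S : {set 'I_n}) (g : 'I_n -> RR) :
  \sum_(j in Q :&: S) g j = \sum_(j in S) Xb j Q * g j.
Proof.
rewrite [LHS]big_mkcond [RHS]big_mkcond; apply: eq_bigr => j _.
rewrite /Xb !inE; case: (j \in S) => /=; last by rewrite andbF.
rewrite andbT; case: (j \in Q) => /=; [by rewrite mul1r|by rewrite mul0r].
Qed.

Lemma cut_ge n (B : 'M[RR]_n) (I J : {set 'I_n}) :
  \sum_(i in I) \sum_(j in J) B i j <= cutnorm B.
Proof.
apply: le_trans (ler_norm _) _; rewrite /cutnorm.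
apply: le_trans (le_bigmax 0 (fun I : {set 'I_n} => \big[Num.max/0]_(J : {set 'I_n})
   `|\sum_(i in I) \sum_(j in J) B i j|) I).
exact: (le_bigmax 0 (fun J : {set 'I_n} => `|\sum_(i in I) \sum_(j in J) B i j|) J).
Qed.

Definition pos n (B : 'M[RR]_n) (X Y : {set 'I_n}) : RR :=
  \big[Num.max/0]_(I : {set 'I_n} | I \subset X) \big[Num.max/0]_(J : {set 'I_n} | J \subset Y)
     \sum_(i in I) \sum_(j in J) B i j.

Definition Urow n p (B : 'M[RR]_n) (S Q : {set 'I_n}) : RR :=
  \big[Num.max/0]_(J : {set 'I_n} | J \subset ~: S) \sum_(i in S) (Xb i Q - p) * phi (\sum_(j in J) B i j).

Definition Ucol n p (B : 'M[RR]_n) (S Q : {set 'I_n}) : RR :=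
  \big[Num.max/0]_(I : {set 'I_n} | I \subset Q :&: S)
     \sum_(j in ~: S) (Xb j Q - p) * phi (\sum_(i in I) B i j).

Lemma pos_pointwise n p (B : 'M[RR]_n) (S Q : {set 'I_n}) : 0 <= p ->
  pos B (Q :&: S) (Q :\: S) <= p * (p * cutnorm B + Urow p B S Q) + Ucol p B S Q.
Proof.
move=> p0.
have c0 : 0 <= cutnorm B by apply: le_trans (cut_ge B set0 set0); rewrite big_set0.
have U0 : 0 <= Urow p B S Q by exact: bigmax_ge0.
have U1 : 0 <= Ucol p B S Q by exact: bigmax_ge0.
have R0 : 0 <= p * (p * cutnorm B + Urow p B S Q) + Ucol p B S Q.
  by rewrite addr_ge0 // mulr_ge0 // addr_ge0 // mulr_ge0.
apply: bigmax_le => // I hI; apply: bigmax_le => // J hJ.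
rewrite exchange_big /=.
apply: le_trans (sum_sub_phi _ hJ) _.
rewrite sum_setD.
set c := fun j => \sum_(i in I) B i j.
have -> : \sum_(j in ~: S) Xb j Q * phi (c j) =
   p * \sum_(j in ~: S) phi (c j) + \sum_(j in ~: S) (Xb j Q - p) * phi (c j).
  rewrite mulr_sumr -big_split /=; apply: eq_bigr => j _; ring.
apply: lerD; last first.
  rewrite /Ucol /c; exact: (@le_bigmax_cond _ _ _ 0 I (fun I : {set 'I_n} => I \subset Q :&: S)
     (fun I : {set 'I_n} => \sum_(j in ~: S) (Xb j Q - p) * phi (\sum_(i in I) B i j)) hI).
apply: ler_wpM2l => //.
have [Js [hJs ->]] := sum_phi_set (~: S) c.
rewrite /c exchange_big /=.
apply: le_trans (sum_sub_phi _ hI) _.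
rewrite sum_setI.
set r := fun i => \sum_(j in Js) B i j.
have -> : \sum_(i in S) Xb i Q * phi (r i) =
   p * \sum_(i in S) phi (r i) + \sum_(i in S) (Xb i Q - p) * phi (r i).
  rewrite mulr_sumr -big_split /=; apply: eq_bigr => j _; ring.
apply: lerD; last first.
  rewrite /Urow /r; exact: (@le_bigmax_cond _ _ _ 0 Js (fun J : {set 'I_n} => J \subset ~: S)
     (fun J : {set 'I_n} => \sum_(i in S) (Xb i Q - p) * phi (\sum_(j in J) B i j)) hJs).
apply: ler_wpM2l => //.
have [Is [_ ->]] := sum_phi_set S r.
exact: cut_ge.
Qed.

Lemma sum_le_all n (J : {set 'I_n}) (g : 'I_n -> RR) :
  (forall j, 0 <= g j) -> \sum_(j in J) g j <= \sum_j g j.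
Proof.
move=> hg; rewrite [X in X <= _]big_mkcond; apply: ler_sum => j _.
by case: ifP.
Qed.

Lemma EE_Xind n p (i : 'I_n) (G : {set 'I_n} -> {set 'I_n} -> RR) :
  (forall Q Q', G (i |: Q) Q' = G (Q :\ i) Q') ->
  EE p (fun Q Q' => Xb i Q * G Q Q') = p * EE p G.
Proof.
move=> H; rewrite /EE.
transitivity (expect_subset p (fun Q => Xb i Q * expect_subset p (fun Q' => G Q Q'))).
  by apply: E_ext => Q; rewrite EZ.
by rewrite E_ind // => Q; apply: E_ext => Q'; rewrite H.
Qed.

Lemma sqrt_bound n p (S : {set 'I_n}) (x : 'I_n -> RR) : 0 <= p <= 1 ->
  Num.sqrt (2 * (p - p * p) * \sum_(i in S) x i ^+ 2) <=
  Num.sqrt (2 * p) * Num.sqrt (\sum_i x i ^+ 2).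
Proof.
case/andP=> p0 p1.
rewrite -sqrtrM; last by lra.
apply: ler_wsqrtr.
have h1 := sum_le_all S (fun i => sqr_ge0 (x i)).
have h2 : 0 <= \sum_(i in S) x i ^+ 2 by apply: sumr_ge0 => i _; exact: sqr_ge0.
nra.
Qed.

Lemma EE_abs_bound n p (K : {set 'I_n}) (m : 'I_n -> RR) : 0 <= p <= 1 ->
  EE p (fun Q Q' => `|\sum_(k in K) Z k Q Q' * m k|) <=
  Num.sqrt (2 * p) * Num.sqrt (\sum_k m k ^+ 2).
Proof.
move=> hp; apply: le_trans (EE_CS _ hp) _.
by rewrite EE_sq; apply: sqrt_bound.
Qed.

Lemma EUrow n p (B : 'M[RR]_n) (S : {set 'I_n}) : 0 <= p <= 1 ->
  expect_subset p (Urow p B S) <= Num.sqrt (2 * p) * colnorm B.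
Proof.
move=> hp; rewrite /Urow.
apply: le_trans (@symmetrize n p {set 'I_n} S (fun (Q J : {set 'I_n}) => J \subset ~: S)
   (fun (J : {set 'I_n}) i => phi (\sum_(j in J) B i j)) hp) _.
apply: le_trans (@contraction n p {set 'I_n} S (fun (Q J : {set 'I_n}) => J \subset ~: S)
   (fun (J : {set 'I_n}) i => \sum_(j in J) B i j) set0 hp _ _ _) _.
- by move=> Q; exact: sub0set.
- by move=> k; rewrite big_set0.
- by [].
apply: (@le_trans _ _ (EE p (fun Q Q' => \sum_j `|\sum_(i in S) Z i Q Q' * B i j|))).
  apply: EE_le => // Q Q'; apply: bigmax_le => [|J _].
    by apply: sumr_ge0 => j _; exact: normr_ge0.
  have -> : \sum_(i in S) Z i Q Q' * (\sum_(j in J) B i j) =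
     \sum_(j in J) \sum_(i in S) Z i Q Q' * B i j.
    by rewrite exchange_big /=; apply: eq_bigr => i _; rewrite mulr_sumr.
  apply: le_trans (sum_le_all J (fun j => normr_ge0 _)).
  by apply: ler_sum => j _; exact: ler_norm.
rewrite EEsum /colnorm mulr_sumr; apply: ler_sum => j _.
exact: (EE_abs_bound S (fun i => B i j) hp).
Qed.

Lemma setIU1D1 n (k : 'I_n) (Q S : {set 'I_n}) : k \notin S ->
  (k |: Q) :&: S = (Q :\ k) :&: S.
Proof.
move=> hk; apply/setP => x; rewrite !inE; case: eqP => // ->.
by rewrite (negbTE hk) andbF.
Qed.

Lemma EUcol n p (B : 'M[RR]_n) (S : {set 'I_n}) : 0 <= p <= 1 ->
  expect_subset p (Ucol p B S) <= p * Num.sqrt (2 * p) * colnorm B^T.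
Proof.
move=> hp; rewrite /Ucol.
apply: le_trans (@symmetrize n p {set 'I_n} (~: S) (fun (Q I : {set 'I_n}) => I \subset Q :&: S)
   (fun (I : {set 'I_n}) j => phi (\sum_(i in I) B i j)) hp) _.
apply: le_trans (@contraction n p {set 'I_n} (~: S) (fun (Q I : {set 'I_n}) => I \subset Q :&: S)
   (fun (I : {set 'I_n}) j => \sum_(i in I) B i j) set0 hp _ _ _) _.
- by move=> Q; exact: sub0set.
- by move=> k; rewrite big_set0.
- by move=> Q t k; rewrite inE => hk /=; rewrite setIU1D1.
set v := fun i Q Q' => \sum_(j in ~: S) Z j Q Q' * B i j.
apply: (@le_trans _ _ (EE p (fun Q Q' => \sum_(i in S) Xb i Q * `|v i Q Q'|))).
  apply: EE_le => // Q Q'; apply: bigmax_le => [|I hI].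
    apply: sumr_ge0 => i _; apply: mulr_ge0; last exact: normr_ge0.
    by rewrite /Xb ler0n.
  have -> : \sum_(j in ~: S) Z j Q Q' * (\sum_(i in I) B i j) = \sum_(i in I) v i Q Q'.
    by rewrite exchange_big /=; apply: eq_bigr => j _; rewrite mulr_sumr.
  rewrite -sum_setI.
  apply: le_trans (sum_sub_le hI (fun i => normr_ge0 _)).
  by apply: ler_sum => i _; exact: ler_norm.
rewrite EEsum /colnorm !mulr_sumr.
apply: (@le_trans _ _ (\sum_(i in S) p * (Num.sqrt (2 * p) * Num.sqrt (\sum_j B i j ^+ 2)))).
  apply: ler_sum => i iS; rewrite EE_Xind.
    apply: ler_wpM2l; first by case/andP: hp.
    exact: (EE_abs_bound (~: S) (fun j => B i j) hp).
  move=> Q Q'; congr (`| _ |); apply: eq_bigr => j; rewrite inE => jS.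
  have hji : j != i by apply: contraNneq jS => ->.
  by rewrite /Z Xb_offU // Xb_offD.
apply: le_trans (sum_le_all S _) _.
  move=> i; apply: mulr_ge0; first by case/andP: hp.
  by apply: mulr_ge0; exact: sqrtr_ge0.
by apply: ler_sum => i _; rewrite mulrA; under [X in _ <= _ * Num.sqrt X]eq_bigr do rewrite mxE.
Qed.

Lemma E_pos_S n p (B : 'M[RR]_n) (S : {set 'I_n}) : 0 <= p <= 1 ->
  expect_subset p (fun Q => pos B (Q :&: S) (Q :\: S)) <=
  p * (p * cutnorm B + Num.sqrt (2 * p) * colnorm B) + p * Num.sqrt (2 * p) * colnorm B^T.
Proof.
move=> hp; have p0 : 0 <= p by case/andP: hp.
apply: le_trans (E_le hp (fun Q => pos_pointwise B S Q p0)) _.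
rewrite ED EZ ED E_const.
apply: lerD; last exact: EUcol.
apply: ler_wpM2l => //; apply: lerD => //; exact: EUrow.
Qed.

Lemma E_swap n p r (F : {set 'I_n} -> {set 'I_n} -> RR) :
  expect_subset p (fun Q => expect_subset r (fun S => F Q S)) =
  expect_subset r (fun S => expect_subset p (fun Q => F Q S)).
Proof.
rewrite /expect_subset.
under eq_bigr do rewrite mulr_sumr.
rewrite exchange_big /=; apply: eq_bigr => S _.
by rewrite mulr_sumr; apply: eq_bigr => Q _; ring.
Qed.

Lemma sum_setD2 n (J S : {set 'I_n}) (g : 'I_n -> RR) :
  \sum_(j in J :\: S) g j = \sum_(j in J) (1 - Xb j S) * g j.
Proof.
rewrite [LHS]big_mkcond [RHS]big_mkcond; apply: eq_bigr => j _.
rewrite /Xb !inE; case: (j \in J); rewrite ?andbF ?andbT //=.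
case: (j \in S) => /=; [by rewrite subrr mul0r|by rewrite subr0 mul1r].
Qed.

Lemma E_half_pair n (i j : 'I_n) : i != j ->
  4 * expect_subset (2^-1) (fun S => Xb i S * (1 - Xb j S)) = 1.
Proof.
move=> hij; rewrite E_ind; last first.
  by move=> Q; rewrite /Xb !inE eq_sym (negbTE hij).
rewrite EB E_const E_X'.
have h2 : (2 : RR) != 0 by rewrite pnatr_eq0.
by field.
Qed.

Lemma decouple_pt n (B : 'M[RR]_n) (Q : {set 'I_n}) : (forall i, B i i = 0) ->
  pos B Q Q <= 4 * expect_subset (2^-1) (fun S => pos B (Q :&: S) (Q :\: S)).
Proof.
move=> hB.
have hh : 0 <= (2^-1 : RR) <= 1.
  by apply/andP; split; [rewrite invr_ge0 ler0n|rewrite invf_le1 ?ler1n ?ltr0n].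
have R0 : 0 <= 4 * expect_subset (2^-1) (fun S => pos B (Q :&: S) (Q :\: S)).
  by apply: mulr_ge0; [rewrite ler0n|apply: E_ge0 => // S; exact: bigmax_ge0].
apply: bigmax_le => // I hI; apply: bigmax_le => // J hJ.
have -> : \sum_(i in I) \sum_(j in J) B i j =
   4 * expect_subset (2^-1) (fun S => \sum_(i in I :&: S) \sum_(j in J :\: S) B i j).
  transitivity (4 * expect_subset (2^-1) (fun S => \sum_(i in I) \sum_(j in J)
      B i j * (Xb i S * (1 - Xb j S)))).
    rewrite Esum mulr_sumr; apply: eq_bigr => i _.
    rewrite Esum mulr_sumr; apply: eq_bigr => j _.
    rewrite EZ mulrCA; case: (eqVneq i j) => [<-|hij]; first by rewrite hB !mul0r.
    by rewrite E_half_pair // mulr1.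
  congr (_ * _); apply: E_ext => S.
  rewrite setIC sum_setI; apply: eq_bigr => i _.
  rewrite sum_setD2 mulr_sumr; apply: eq_bigr => j _; ring.
apply: ler_wpM2l; first by rewrite ler0n.
apply: E_le => // S.
have hI' : I :&: S \subset Q :&: S by apply: setSI.
have hJ' : J :\: S \subset Q :\: S by apply: setSD.
rewrite /pos.
apply: le_trans (@le_bigmax_cond _ _ _ 0 (I :&: S) (fun I0 : {set 'I_n} => I0 \subset Q :&: S)
     (fun I0 : {set 'I_n} => \big[Num.max/0]_(J0 : {set 'I_n} | J0 \subset Q :\: S)
        \sum_(i in I0) \sum_(j in J0) B i j) hI').
exact: (@le_bigmax_cond _ _ _ 0 (J :\: S) (fun J0 : {set 'I_n} => J0 \subset Q :\: S)
     (fun J0 : {set 'I_n} => \sum_(i in I :&: S) \sum_(j in J0) B i j) hJ').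
Qed.

Lemma E_pos n p (B : 'M[RR]_n) : 0 <= p <= 1 -> (forall i, B i i = 0) ->
  expect_subset p (fun Q => pos B Q Q) <=
  4 * (p * (p * cutnorm B + Num.sqrt (2 * p) * colnorm B) + p * Num.sqrt (2 * p) * colnorm B^T).
Proof.
move=> hp hB.
have hh : 0 <= (2^-1 : RR) <= 1.
  by apply/andP; split; [rewrite invr_ge0 ler0n|rewrite invf_le1 ?ler1n ?ltr0n].
apply: le_trans (E_le hp (fun Q => decouple_pt Q hB)) _.
rewrite EZ E_swap; apply: ler_wpM2l; first by rewrite ler0n.
rewrite -[X in _ <= X](@E_const n (2^-1)).
apply: E_le => // S; exact: E_pos_S.
Qed.

Lemma diag_row n (A : 'M[RR]_n) i (J : {set 'I_n}) :
  \sum_(j in J) diagpart A i j = if i \in J then A i i else 0.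
Proof.
rewrite big_mkcond (bigD1 i) //= big1 ?addr0.
  by rewrite /diagpart mxE eqxx.
by move=> j hj; rewrite /diagpart mxE eq_sym (negbTE hj); case: ifP.
Qed.

Lemma cut_ge_abs n (B : 'M[RR]_n) (I J : {set 'I_n}) :
  `|\sum_(i in I) \sum_(j in J) B i j| <= cutnorm B.
Proof.
rewrite /cutnorm.
apply: le_trans (le_bigmax 0 (fun I : {set 'I_n} => \big[Num.max/0]_(J : {set 'I_n})
   `|\sum_(i in I) \sum_(j in J) B i j|) I).
exact: (le_bigmax 0 (fun J : {set 'I_n} => `|\sum_(i in I) \sum_(j in J) B i j|) J).
Qed.

Lemma pos_ge n (B : 'M[RR]_n) (Q I J : {set 'I_n}) : I \subset Q -> J \subset Q ->
  \sum_(i in I) \sum_(j in J) B i j <= pos B Q Q.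
Proof.
move=> hI hJ; rewrite /pos.
apply: le_trans (@le_bigmax_cond _ _ _ 0 I (fun I0 : {set 'I_n} => I0 \subset Q)
     (fun I0 : {set 'I_n} => \big[Num.max/0]_(J0 : {set 'I_n} | J0 \subset Q)
        \sum_(i in I0) \sum_(j in J0) B i j) hI).
exact: (@le_bigmax_cond _ _ _ 0 J (fun J0 : {set 'I_n} => J0 \subset Q)
     (fun J0 : {set 'I_n} => \sum_(i in I) \sum_(j in J0) B i j) hJ).
Qed.

Lemma cutsub_bound n (A : 'M[RR]_n) (Q : {set 'I_n}) :
  cutnorm_sub Q A <= pos (A - diagpart A) Q Q + pos (- (A - diagpart A)) Q Q
     + \sum_i Xb i Q * `|A i i|.
Proof.
set B := A - diagpart A.
have P1 : 0 <= pos B Q Q by exact: bigmax_ge0.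
have P2 : 0 <= pos (- B) Q Q by exact: bigmax_ge0.
have P3 : 0 <= \sum_i Xb i Q * `|A i i|.
  by apply: sumr_ge0 => i _; apply: mulr_ge0; [rewrite /Xb ler0n|exact: normr_ge0].
apply: bigmax_le => [|I hI]; first by rewrite !addr_ge0.
apply: bigmax_le => [|J hJ]; first by rewrite !addr_ge0.
have eA : \sum_(i in I) \sum_(j in J) A i j =
   \sum_(i in I) \sum_(j in J) B i j + \sum_(i in I) \sum_(j in J) diagpart A i j.
  rewrite -big_split; apply: eq_bigr => i _; rewrite -big_split; apply: eq_bigr => j _.
  by rewrite /B !mxE /= subrK.
rewrite eA; apply: (le_trans (ler_normD _ _)).
apply: lerD.
  have hB := pos_ge B hI hJ.
  have hNB := pos_ge (- B) hI hJ.
  have eN : \sum_(i in I) \sum_(j in J) (- B) i j = - \sum_(i in I) \sum_(j in J) B i j.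
    rewrite -sumrN; apply: eq_bigr => i _; rewrite -sumrN; apply: eq_bigr => j _.
    by rewrite mxE.
  rewrite eN in hNB.
  case: (lerP 0 (\sum_(i in I) \sum_(j in J) B i j)) => h.
    by rewrite ger0_norm //; lra.
  by rewrite ltr0_norm //; lra.
under eq_bigr do rewrite diag_row.
apply: le_trans (ler_norm_sum _ _ _) _.
apply: (@le_trans _ _ (\sum_(i in I) `|A i i|)).
  by apply: ler_sum => i _; case: ifP => _; rewrite ?normr0 ?normr_ge0.
apply: le_trans (sum_sub_le hI (fun i => normr_ge0 (A i i))) _.
rewrite big_mkcond; apply: ler_sum => i _; rewrite /Xb.
by case: (i \in Q); rewrite ?mul1r ?mul0r.
Qed.

Lemma diag_sum_bound n (A : 'M[RR]_n) :
  \sum_i `|A i i| <= 2 * cutnorm (diagpart A).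
Proof.
have dI : forall I : {set 'I_n}, \sum_(i in I) \sum_(j in I) diagpart A i j = \sum_(i in I) A i i.
  by move=> I; apply: eq_bigr => i hi; rewrite diag_row hi.
set P := [set i | 0 <= A i i].
have e : \sum_i `|A i i| = \sum_(i in P) A i i - \sum_(i in ~: P) A i i.
  rewrite (bigID (fun i => 0 <= A i i)) /=; congr (_ + _).
    by apply: eq_big => [i|i hi]; [rewrite inE|rewrite ger0_norm].
  rewrite -sumrN; apply: eq_big => [i|i hi]; first by rewrite !inE.
  by rewrite ltr0_norm // ltNge.
have h1 := cut_ge_abs (diagpart A) P P.
have h2 := cut_ge_abs (diagpart A) (~: P) (~: P).
rewrite !dI in h1 h2.
have h3 := ler_norm (\sum_(i in P) A i i).
have h4 := ler_norm (- \sum_(i in ~: P) A i i).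
rewrite normrN in h4.
rewrite e; lra.
Qed.

Lemma cutnorm_neg n (B : 'M[RR]_n) : cutnorm (- B) = cutnorm B.
Proof.
rewrite /cutnorm; apply: eq_bigr => I _; apply: eq_bigr => J _.
rewrite (_ : \sum_(i in I) \sum_(j in J) (- B) i j = - \sum_(i in I) \sum_(j in J) B i j) ?normrN //.
rewrite -sumrN; apply: eq_bigr => i _.
by rewrite -sumrN; apply: eq_bigr => j _; rewrite mxE.
Qed.

Lemma colnorm_le n (A B : 'M[RR]_n) :
  (forall i j, B i j ^+ 2 <= A i j ^+ 2) -> colnorm B <= colnorm A.
Proof.
move=> h; apply: ler_sum => j _; apply: ler_wsqrtr; apply: ler_sum => i _; exact: h.
Qed.

Lemma colnorm_ge0 n (A : 'M[RR]_n) : 0 <= colnorm A.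
Proof. by apply: sumr_ge0 => j _; exact: sqrtr_ge0. Qed.

Lemma cutnorm_ge0 n (A : 'M[RR]_n) : 0 <= cutnorm A.
Proof. apply: le_trans (cut_ge_abs A set0 set0); exact: normr_ge0. Qed.

Lemma E_Xc n p (i : 'I_n) c : expect_subset p (fun Q => Xb i Q * c) = p * c.
Proof.
transitivity (expect_subset p (fun Q => c * Xb i Q)).
  by apply: E_ext => Q; rewrite mulrC.
by rewrite EZ E_X' mulrC.
Qed.

Theorem theorem1p2 :
  exists C : RR, 0 < C /\
  forall (n : nat) (A : 'M[RR]_n) (q : RR),
    0 < q -> q <= n%:R ->
    let p := q / n%:R in
    expect_subset p (fun Q => cutnorm_sub Q A) <=
      C * (p ^+ 2 * cutnorm (A - diagpart A) + p * cutnorm (diagpart A)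
           + p * Num.sqrt p * (colnorm A + colnorm A^T)).
Proof.
exists 16; split; first by rewrite ltr0n.
move=> n A q hq hqn /=; set p := q / n%:R.
have n0 : 0 < n%:R :> RR by apply: lt_le_trans hq hqn.
have p0 : 0 <= p by rewrite /p divr_ge0 // ltW.
have p1 : p <= 1 by rewrite /p ler_pdivrMr // mul1r.
have hp : 0 <= p <= 1 by rewrite p0 p1.
set B := A - diagpart A.
have hB : forall i, B i i = 0 by move=> i; rewrite /B !mxE eqxx subrr.
have hNB : forall i, (- B) i i = 0 by move=> i; rewrite mxE hB oppr0.
have step1 := E_le hp (fun Q => cutsub_bound A Q).
rewrite -/B !ED Esum in step1.
rewrite (eq_bigr (fun i => p * `|A i i|)) in step1; last by move=> i _; rewrite E_Xc.
have eB := E_pos hp hB.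
have eNB := E_pos hp hNB.
have ctN : cutnorm (- B) = cutnorm B by exact: cutnorm_neg.
have clN : colnorm (- B) = colnorm B.
  by apply: eq_bigr => j _; congr (Num.sqrt _); apply: eq_bigr => i _; rewrite mxE sqrrN.
have clNT : colnorm (- B)^T = colnorm B^T.
  by apply: eq_bigr => j _; congr (Num.sqrt _); apply: eq_bigr => i _; rewrite !mxE sqrrN.
rewrite ctN clN clNT in eNB.
have dg := diag_sum_bound A.
rewrite -mulr_sumr in step1.
set s := Num.sqrt (2 * p).
set sp := Num.sqrt p.
have hs : s <= 2 * sp.
  rewrite /s /sp sqrtrM; last by rewrite ler0n.
  apply: ler_wpM2r; first exact: sqrtr_ge0.
  have h4 : (2:RR) = Num.sqrt (2 ^+ 2) by rewrite sqrtr_sqr ger0_norm // ler0n.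
  rewrite [X in _ <= X]h4; apply: ler_wsqrtr.
  by rewrite expr2 -natrM ler_nat.
rewrite -/s in eB eNB.
have s0 : 0 <= s by exact: sqrtr_ge0.
have sp0 : 0 <= sp by exact: sqrtr_ge0.
have cB : colnorm B <= colnorm A.
  apply: colnorm_le => i j; rewrite /B !mxE.
  case: eqP => _; last by rewrite subr0.
  by rewrite subrr expr0n /= sqr_ge0.
have cBT : colnorm B^T <= colnorm A^T.
  apply: colnorm_le => i j; rewrite /B !mxE.
  case: eqP => _; last by rewrite subr0.
  by rewrite subrr expr0n /= sqr_ge0.
have k1 : p * s * colnorm B <= p * (2 * sp) * colnorm A.
  apply: ler_pM => //; [exact: mulr_ge0|exact: colnorm_ge0|exact: ler_wpM2l].
have k2 : p * s * colnorm B^T <= p * (2 * sp) * colnorm A^T.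
  apply: ler_pM => //; [exact: mulr_ge0|exact: colnorm_ge0|exact: ler_wpM2l].
have k3 : p * \sum_i `|A i i| <= p * (2 * cutnorm (diagpart A)) by apply: ler_wpM2l.
have c0 := cutnorm_ge0 B.
have m1 : 0 <= p * p * cutnorm B by apply: mulr_ge0 => //; apply: mulr_ge0.
have m2 : 0 <= p * cutnorm (diagpart A) by apply: mulr_ge0 => //; exact: cutnorm_ge0.
rewrite expr2 -/B.
have e3 : \sum_(i < n) `|A i i| = \sum_i `|A i i| by [].
rewrite e3 in step1.
lra.
Qed.
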